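(* Let $S\subseteq\mathbb{R}^n$ be a differential subspace and $x\in S$. Let $R(S)=\{f|_S\colon f\in C^\infty(\mathbb{R}^n)\}$. Then every derivation of $R(S)$ at $x$ extends to a unique derivation of $C^\infty(S)$ at $x$.
   Context: For $S\subseteq\mathbb{R}^n$, $C^\infty(S)$ consists of functions $f\colon S\to\mathbb{R}$ such that for each $x\in S$ there is a neighbourhood $U$ of $x$ in $\mathbb{R}^n$ and $f_x\in C^\infty(\mathbb{R}^n)$ with $f|_{U\cap S}=f_x|_{U\cap S}$; $R(S)\subseteq C^\infty(S)$. For a ring $A$ of real functions on $S$ (here $A=R(S)$ or $C^\infty(S)$), a derivation of $A$ at $x$ is a linear map $u\colon A\to\mathbb{R}$ satisfying $u(fh)=u(f)h(x)+f(x)u(h)$ for all $f,h\in A$. *)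

(* Defs.v *)
From HB Require Import structures.
From mathcomp Require Import all_boot all_order all_algebra.
From mathcomp Require Import all_classical all_reals all_analysis.
Unset Printing Implicit Defensive.
Import Order.TTheory GRing.Theory Num.Theory.
Import numFieldNormedType.Exports.
Local Open Scope classical_set_scope.
Local Open Scope ring_scope.

Fixpoint Ck {R : realType} {n : nat} (k : nat) (f : 'rV[R]_n -> R) : Prop :=
  match k with
  | 0%N => True
  | k'.+1 => (forall x, differentiable f x) /\
             (forall v : 'rV[R]_n, Ck k' (fun x => 'd f x v))
  end.

Definition smooth {R : realType} {n : nat} (f : 'rV[R]_n -> R) : Prop :=
  forall k, Ck k f.

Definition pts {R : realType} {n : nat} (S : set 'rV[R]_n) := {x : 'rV[R]_n | S x}.

Definition RS {R : realType} {n : nat} (S : set 'rV[R]_n) (f : pts S -> R) : Prop :=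
  exists g : 'rV[R]_n -> R, smooth g /\ forall y : pts S, f y = g (sval y).

Definition CinfS {R : realType} {n : nat} (S : set 'rV[R]_n) (f : pts S -> R) : Prop :=
  forall x : pts S, exists U : set 'rV[R]_n, nbhs (sval x) U /\
    exists g : 'rV[R]_n -> R, smooth g /\
      forall y : pts S, U (sval y) -> f y = g (sval y).

Definition derivation_at {R : realType} {n : nat} {S : set 'rV[R]_n}
    (A : (pts S -> R) -> Prop) (x : pts S) (u : (pts S -> R) -> R) : Prop :=
  (forall f h, A f -> A h -> u (fun y => f y + h y) = u f + u h) /\
  (forall (a : R) f, A f -> u (fun y => a * f y) = a * u f) /\
  (forall f h, A f -> A h -> u (fun y => f y * h y) = u f * h x + f x * u h).

(* Main.v *)
Require Import Defs.
From HB Require Import structures.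
From mathcomp Require Import all_boot all_order all_algebra.
From mathcomp Require Import all_classical all_reals all_analysis.
From mathcomp Require Import ring lra.
Import Order.TTheory GRing.Theory Num.Theory.
Import numFieldNormedType.Exports.
Local Open Scope classical_set_scope.
Local Open Scope ring_scope.



Section Dk.
Variables (R : realType) (V : normedModType R).

Fixpoint Dk (k : nat) (f : V -> R) : Prop :=
  match k with
  | 0%N => True
  | k'.+1 => (forall x, differentiable f x) /\
             (forall v : V, Dk k' (fun x => 'd f x v))
  end.

Lemma Dk_mono k f : Dk k.+1 f -> Dk k f.
Proof.
elim: k f => [//|k IH] f [df Hf]; split => // v; exact: IH.
Qed.

Lemma Dk_cst k (c : R) : Dk k (fun _ => c).
Proof.
elim: k c => [//|k IH] c; split => [x|v]; first exact: differentiable_cst.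
have -> : (fun x => 'd (fun _ : V => c) x v) = (fun _ => 0).
  by apply/funext => x; rewrite (diff_cst (V:=V) (W:=R) c x).
exact: IH.
Qed.

Lemma Dk_add k f g : Dk k f -> Dk k g -> Dk k (fun x => f x + g x).
Proof.
elim: k f g => [//|k IH] f g [df Hf] [dg Hg]; split => [x|v].
  exact: (differentiableD (df x) (dg x)).
have -> : (fun x => 'd (fun y => f y + g y) x v) = (fun x => 'd f x v + 'd g x v).
  by apply/funext => x; rewrite (diffD (df x) (dg x)).
by apply: IH; [exact: Hf|exact: Hg].
Qed.

Lemma Dk_mul k f g : Dk k f -> Dk k g -> Dk k (fun x => f x * g x).
Proof.
elim: k f g => [//|k IH] f g Df Dg; have [df Hf] := Df; have [dg Hg] := Dg.
split => [x|v].
  exact: (differentiableM (df x) (dg x)).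
have -> : (fun x => 'd (fun y => f y * g y) x v) =
   (fun x => f x * 'd g x v + g x * 'd f x v).
  by apply/funext => x; rewrite (diffM (df x) (dg x)).
apply: Dk_add; apply: IH; by [exact: Dk_mono | exact: Hg | exact: Hf].
Qed.

End Dk.
Arguments Dk {R V}.



Lemma Dk_comp (R : realType) (V : normedModType R) k (th : R -> R) (g : V -> R) :
  @Dk R R k th -> Dk k g -> Dk k (fun x => th (g x)).
Proof.
elim: k th g => [//|k IH] th g Dth Dg; have [dth Hth] := Dth; have [dg Hg] := Dg.
split => [x|v].
  exact: (differentiable_comp (dg x) (dth (g x))).
have -> : (fun x => 'd (fun y => th (g y)) x v) =
   (fun x => 'd g x v * (fun t => 'd th t 1) (g x)).
  apply/funext => x.
  rewrite (diff_comp (dg x) (dth (g x))) /=.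
  by rewrite -[in LHS](mulr1 ('d g x v)) -[X in 'd th _ X]/(('d g x v) *: (1:R)) linearZ.
apply: (@Dk_mul R V k (fun x => 'd g x v) (fun x => 'd th (g x) 1)); first exact: Hg.
apply: (IH (fun t => 'd th t 1)); [exact: Hth | exact: Dk_mono].
Qed.

Lemma Dk_linear (R : realType) (V : normedModType R) k (f : {linear V -> R}) :
  continuous f -> Dk k f.
Proof.
case: k => [//|k] cf; split => [x|v]; first exact: linear_differentiable.
have -> : (fun x => 'd f x v) = (fun _ => f v).
  by apply/funext => x; rewrite diff_lin.
exact: Dk_cst.
Qed.

Lemma Dk_coord (R : realType) n k (i : 'I_n) :
  @Dk R 'rV[R]_n k (fun y => y ord0 i).
Proof.
have @f : {linear 'rV[R]_n -> R}.
  by exists (fun N : 'rV[R]_n => N ord0 i); do 2![eexists]; do ?[constructor];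
     rewrite ?mxE// => ? *; rewrite ?mxE//; move=> ?; rewrite !mxE.
rewrite (_ : (fun _ => _) = f) //; apply: Dk_linear; exact: coord_continuous.
Qed.

Lemma Dk_sum (R : realType) (V : normedModType R) k (I : Type) (s : seq I) (F : I -> V -> R) :
  (forall i, Dk k (F i)) -> Dk k (fun y => \sum_(i <- s) F i y).
Proof.
move=> HF; elim: s => [|a s IH].
  under eq_fun do rewrite big_nil; exact: Dk_cst.
under eq_fun do rewrite big_cons; exact: Dk_add.
Qed.



Section G.
Variable R : realType.

Definition G (m : nat) (t : R) : R :=
  if 0 < t then (t^-1)^+m * expR (- t^-1) else 0.

Definition Gd (m : nat) (t : R) : R := - (m%:R) * G m.+1 t + G m.+2 t.

Lemma G_derive_pos (m : nat) (t : R) : 0 < t -> is_derive t 1 (G m) (Gd m t).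
Proof.
move=> t0.
have Hinv : is_derive t 1 (fun s : R => s^-1) (- t ^- 2).
  apply: is_derive_eq.
    exact: (@is_deriveV R id t 1 1 (lt0r_neq0 t0) (is_derive_id _ _)).
  by rewrite /= scaler1.
apply: (@near_eq_is_derive R R R (((fun s : R => s^-1) ^+ m) * (expR \o (fun s : R => - s^-1))) (G m) t 1 (Gd m t)).
  near=> s; rewrite /G ifT ?fctE //; near: s; exact: lt_nbhsr.
apply: is_derive_eq.
have sc : forall a b : R, a *: b = a * b by [].
rewrite /Gd /G !ifT // !fctE -exprVn /=.
case: m => [|m]; rewrite /= ?expr0 ?exprS ?expr2 ?expr0 /= ?mulr0n; rewrite ?sc; ring.
Unshelve. all: by end_near.
Qed.

Lemma G_neg (m : nat) (t : R) : t <= 0 -> G m t = 0.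
Proof. by move=> t0; rewrite /G ltNge t0. Qed.

Lemma G_derive_neg (m : nat) (t : R) : t < 0 -> is_derive t 1 (G m) (Gd m t).
Proof.
move=> t0.
apply: (@near_eq_is_derive R R R (cst 0) (G m) t 1 (Gd m t)).
  near=> s; rewrite G_neg //; apply: ltW; near: s; exact: lt_nbhsl.
apply: is_derive_eq; rewrite /Gd !G_neg ?ltW //; ring.
Unshelve. all: by end_near.
Qed.

Lemma G_bound (m : nat) (h : R) : `|h^-1 * G m h| <= (m.+2)`!%:R * `|h|.
Proof.
have K0 : 0 < (m.+2)`!%:R :> R by rewrite ltr0n fact_gt0.
case: (ltP 0 h) => h0; last first.
  by rewrite G_neg // mulr0 normr0 mulr_ge0 // ltW.
rewrite /G ifT //.
set s := h^-1.
have hs : h = s^-1 by rewrite invrK.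
clearbody s.
have s0 : 0 < s by rewrite -invr_gt0 -hs.
have E0 : 0 < expR s by exact: expR_gt0.
have H1 : s ^+ m.+2 <= expR s * (m.+2)`!%:R.
  rewrite -ler_pdivrMr //.
  apply: le_trans (expR_ge1Dxn m.+1 (ltW s0)).
  by rewrite lerDr.
have nn : 0 <= s * (s ^+ m / expR s).
  by apply: mulr_ge0; [exact: ltW | apply: divr_ge0; [exact: exprn_ge0 (ltW s0) | exact: ltW]].
rewrite expRN ger0_norm //.
rewrite (gtr0_norm h0).
rewrite hs.
have sn0 : s != 0 by rewrite lt0r_neq0.
have En0 : expR s != 0 by rewrite lt0r_neq0.
have -> : s * (s ^+ m * (expR s)^-1) = s ^+ m.+2 * ((expR s)^-1 * s^-1).
  by rewrite !exprS; move: (s ^+ m) => p; field; rewrite sn0 En0.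
have -> : (m.+2)`!%:R * s^-1 = (expR s * (m.+2)`!%:R) * ((expR s)^-1 * s^-1).
  by field; rewrite sn0 En0.
by apply: ler_wpM2r => //; rewrite mulr_ge0 ?invr_ge0 ?ltW.
Qed.

Lemma G_derive0 (m : nat) : is_derive (0:R) (1:R) (G m) (Gd m 0).
Proof.
have G0 : forall k, G k 0 = 0 by move=> k; rewrite G_neg.
have Hc : (fun h : R => h^-1 *: ((G m \o shift (0:R)) (h *: (1:R)) - G m 0)) @ (0:R)^' --> (0:R).
  apply/cvgr0Pnorm_lt => eps eps0.
  have K0 : 0 < (m.+2)`!%:R :> R by rewrite ltr0n fact_gt0.
  near=> h; rewrite /= G0 subr0 addr0 [_%:A]mulr1 -[_ *: _]/(_ * _).
  apply: (le_lt_trans (G_bound m h)).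
  rewrite -ltr_pdivlMl //.
  near: h; apply: dnbhs0_lt; by rewrite ?divr_gt0 ?mulr_gt0 ?invr_gt0.
rewrite /Gd !G0 mulr0 addr0.
apply: DeriveDef; first by apply/cvg_ex; exists 0.
exact: cvg_lim Hc.
Unshelve. all: by end_near.
Qed.

Lemma G_derive (m : nat) (t : R) : is_derive t 1 (G m) (Gd m t).
Proof.
case: (ltgtP t 0) => [t0|t0|->]; [exact: G_derive_neg|exact: G_derive_pos|exact: G_derive0].
Qed.


Lemma G_d (m : nat) (t v : R) : differentiable (G m) t /\ 'd (G m) t v = v * Gd m t.
Proof.
have [dG vG] := G_derive m t.
have dG' := dG; move/derivable1_diffP: dG' => dG'.
split => //.
by rewrite (deriv1E dG) /= derive1E vG.
Qed.

Lemma Dk_G k m : @Dk R R k (G m).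
Proof.
elim: k m => [//|k IH] m; split => [t|v]; first by case: (G_d m t 0).
have -> : (fun t => 'd (G m) t v) =
    (fun t => (fun _ => v) t * ((fun t => (fun _ => - (m%:R)) t * G m.+1 t) t + G m.+2 t)).
  by apply/funext => t; case: (G_d m t v) => _ ->.
apply: Dk_mul; first exact: Dk_cst.
apply: Dk_add => //; apply: Dk_mul => //; exact: Dk_cst.
Qed.
End G.
Arguments G {R}.



Lemma Ck_Dk (R : realType) n k (f : 'rV[R]_n -> R) : Ck k f <-> Dk k f.
Proof.
elim: k f => [//|k IH] f /=; split => -[d H]; split => // v; apply/IH; exact: H.
Qed.

Lemma smooth_Dk (R : realType) n (f : 'rV[R]_n -> R) : smooth f <-> forall k, Dk k f.
Proof. by split => H k; apply/Ck_Dk; exact: H. Qed.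

Lemma bump (R : realType) n (a : 'rV[R]_n) (U : set 'rV[R]_n) :
  nbhs a U -> exists psi, smooth psi /\ psi a = 1 /\ forall y, ~ U y -> psi y = 0.
Proof.
move/nbhs_ballP => [e e0 HU].
pose q := fun y : 'rV[R]_n => \sum_(i < n) ((y ord0 i + (-1) * a ord0 i) * (y ord0 i + (-1) * a ord0 i)).
pose c := (G 0 (e * e))^-1.
have Gpos : 0 < G 0 (e * e) by rewrite /G ifT ?mulr_gt0 // ?expr0 ?mul1r expR_gt0.
exists (fun y => G 0 (e * e + (-1) * q y) * c); split; last split.
- apply/smooth_Dk => k; apply: Dk_mul; last exact: Dk_cst.
  apply: (@Dk_comp R _ k (G 0) (fun y => e * e + (-1) * q y)); first exact: Dk_G.
  apply: Dk_add; first exact: Dk_cst.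
  apply: Dk_mul; first exact: Dk_cst.
  apply: Dk_sum => i.
  apply: Dk_mul; (apply: Dk_add; [exact: Dk_coord | apply: Dk_mul; exact: Dk_cst]).
- have -> : q a = 0 by rewrite /q big1 // => i _; rewrite mulN1r subrr mulr0.
  by rewrite mulr0 addr0 mulfV // lt0r_neq0.
- move=> y nU; rewrite G_neg ?mul0r //.
  rewrite mulN1r subr_le0; apply/negP => /negP; rewrite -ltNge => qlt.
  apply: nU; apply: HU; split => // i j; rewrite ord1 /=.
  have : (y ord0 j + (-1) * a ord0 j) * (y ord0 j + (-1) * a ord0 j) < e * e.
    apply: le_lt_trans qlt; rewrite /q (bigD1 j) //= lerDl.
    by apply: sumr_ge0 => k _; rewrite -expr2 sqr_ge0.
  rewrite mulN1r => Hd.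
  rewrite -ball_normE /= ltr_norml; have e0' : 0 < e by []; apply/andP; split; nra.
Qed.



Section Main.
Variables (R : realType) (n : nat) (S : set 'rV[R]_n).

Lemma RS_cst (c : R) : RS S (fun _ => c).
Proof. exists (fun _ => c); split => //; apply/smooth_Dk => k; exact: Dk_cst. Qed.

Lemma RS_mul f h : RS S f -> RS S h -> RS S (fun y => f y * h y).
Proof.
move=> [g1 [s1 e1]] [g2 [s2 e2]]; exists (fun y => g1 y * g2 y); split.
  apply/smooth_Dk => k; apply: Dk_mul; [exact: (proj1 (smooth_Dk _ _ g1) s1 k) | exact: (proj1 (smooth_Dk _ _ g2) s2 k)].
by move=> y; rewrite e1 e2.
Qed.

Lemma RS_add f h : RS S f -> RS S h -> RS S (fun y => f y + h y).
Proof.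
move=> [g1 [s1 e1]] [g2 [s2 e2]]; exists (fun y => g1 y + g2 y); split.
  apply/smooth_Dk => k; apply: Dk_add; [exact: (proj1 (smooth_Dk _ _ g1) s1 k) | exact: (proj1 (smooth_Dk _ _ g2) s2 k)].
by move=> y; rewrite e1 e2.
Qed.

Lemma RS_CinfS f : RS S f -> CinfS S f.
Proof.
move=> [g [sg eg]] x; exists setT; split; first exact: filterT.
by exists g; split => // y _.
Qed.

Definition Rep (x : pts S) (f : pts S -> R) (p : (pts S -> R) * (pts S -> R)) :=
  [/\ RS S p.1, RS S p.2, p.2 x = 1 & forall y, f y * p.2 y = p.1 y].

Lemma rep_ex x f : CinfS S f -> exists p, Rep x f p.
Proof.
move=> /(_ x) [U [nU [g [sg eg]]]].
have [psi [spsi [psi1 psi0]]] := bump _ _ _ _ nU.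
exists ((fun y => psi (sval y) * g (sval y)), (fun y => psi (sval y))); split => //=.
- by apply: RS_mul; [exists psi | exists g].
- by exists psi.
- move=> y; case: (pselect (U (sval y))) => Uy.
    by rewrite (eg y Uy) mulrC.
  by rewrite psi0 // mulr0 mul0r.
Qed.

End Main.
Arguments RS_cst {R n S}.
Arguments RS_mul {R n S}.
Arguments RS_add {R n S}.
Arguments RS_CinfS {R n S}.
Arguments Rep {R n S}.
Arguments rep_ex {R n S}.

Theorem mainTheorem3 (R : realType) (n : nat) (S : set 'rV[R]_n) (x : pts S)
    (u : (pts S -> R) -> R) :
  derivation_at (RS S) x u ->
  (exists v : (pts S -> R) -> R,
      derivation_at (CinfS S) x v /\ (forall f, RS S f -> v f = u f)) /\
  (forall v1 v2 : (pts S -> R) -> R,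
      derivation_at (CinfS S) x v1 -> (forall f, RS S f -> v1 f = u f) ->
      derivation_at (CinfS S) x v2 -> (forall f, RS S f -> v2 f = u f) ->
      forall f, CinfS S f -> v1 f = v2 f).
Proof.
move=> [uD [uZ uM]].
have u1 : u (fun _ => 1) = 0.
  have := uM (fun _ => 1) (fun _ => 1) (RS_cst 1) (RS_cst 1).
  have -> : (fun _ : pts S => (1:R) * 1) = (fun _ => 1) by apply/funext => y; rewrite mulr1.
  by rewrite mulr1 mul1r => H; lra.
pose val f (p : (pts S -> R) * (pts S -> R)) := u p.1 - f x * u p.2.
have hx : forall f p, Rep x f p -> p.1 x = f x.
  by move=> f p [_ _ p2 Hp]; rewrite -Hp p2 mulr1.
have wd : forall f p q, Rep x f p -> Rep x f q -> val f p = val f q.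
  move=> f [h1 p1] [h2 p2] Rp Rq.
  have /= hx1 := hx _ _ Rp; have /= hx2 := hx _ _ Rq.
  case: Rp => /= Rh1 Rp1 p1x Hp; case: Rq => /= Rh2 Rp2 p2x Hq.
  have E : (fun y => h1 y * p2 y) = (fun y => h2 y * p1 y).
    by apply/funext => y; rewrite -Hp -Hq mulrAC.
  have := uM _ _ Rh1 Rp2; have := uM _ _ Rh2 Rp1; rewrite E => ->.
  rewrite /val /= p1x p2x hx1 hx2 !mulr1 => H; lra.
pose v f := match pselect (exists p, Rep x f p) with
            | left e => val f (projT1 (cid e)) | right _ => 0 end.
have vE : forall f p, Rep x f p -> v f = val f p.
  move=> f p Rp; rewrite /v; case: pselect => [e|ne].
    apply: wd => //; exact: (projT2 (cid e)).
  by exfalso; apply: ne; exists p.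
have uniq : forall w, derivation_at (CinfS S) x w -> (forall f, RS S f -> w f = u f) ->
    forall f p, CinfS S f -> Rep x f p -> w f = val f p.
  move=> w [_ [_ wM]] wu f [h ps] Cf Rp; have /= hx1 := hx _ _ Rp.
  case: Rp => /= Rh Rps psx Hp.
  have := wM _ _ Cf (RS_CinfS _ Rps).
  have -> : (fun y => f y * ps y) = h by apply/funext => y; rewrite Hp.
  rewrite (wu _ Rh) (wu _ Rps) psx mulr1 /val /= => H; lra.
split; last first.
  move=> v1 v2 d1 e1 d2 e2 f Cf; have [p Rp] := rep_ex x f Cf.
  by rewrite (uniq _ d1 e1 f p Cf Rp) (uniq _ d2 e2 f p Cf Rp).
exists v; split; last first.
  move=> f Rf; rewrite (vE f (f, fun _ => 1)) /val /= ?u1 ?mulr0 ?subr0 //.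
  by split => //=; [exact: RS_cst | move=> y; rewrite mulr1].
split; [|split].
- move=> f1 f2 C1 C2.
  have [[h1 p1] R1] := rep_ex x f1 C1; have [[h2 p2] R2] := rep_ex x f2 C2.
  rewrite (vE _ _ R1) (vE _ _ R2).
  have /= hx1 := hx _ _ R1; have /= hx2 := hx _ _ R2.
  case: R1 => /= Rh1 Rp1 p1x H1; case: R2 => /= Rh2 Rp2 p2x H2.
  have R12 : Rep x (fun y => f1 y + f2 y)
      ((fun y => (fun y => h1 y * p2 y) y + (fun y => h2 y * p1 y) y), (fun y => p1 y * p2 y)).
    split => /=.
    - by apply: RS_add; apply: RS_mul.
    - exact: RS_mul.
    - by rewrite p1x p2x mulr1.
    - by move=> y; rewrite -H1 -H2; ring.
  rewrite (vE _ _ R12) /val /=.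
  rewrite uD; try by apply: RS_mul.
  rewrite !uM // p1x p2x hx1 hx2; ring.
- move=> a f Cf.
  have [[h p] Rp] := rep_ex x f Cf; rewrite (vE _ _ Rp).
  have /= hx1 := hx _ _ Rp; case: Rp => /= Rh Rp px Hp.
  have Ra : Rep x (fun y => a * f y) ((fun y => a * h y), p).
    split => //=.
    - exact: (RS_mul (fun _ => a) h (RS_cst a) Rh).
    - by move=> y; rewrite -Hp mulrA.
  rewrite (vE _ _ Ra) /val /= uZ //; ring.
- move=> f1 f2 C1 C2.
  have [[h1 p1] R1] := rep_ex x f1 C1; have [[h2 p2] R2] := rep_ex x f2 C2.
  rewrite (vE _ _ R1) (vE _ _ R2).
  have /= hx1 := hx _ _ R1; have /= hx2 := hx _ _ R2.
  case: R1 => /= Rh1 Rp1 p1x H1; case: R2 => /= Rh2 Rp2 p2x H2.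
  have R12 : Rep x (fun y => f1 y * f2 y)
      ((fun y => h1 y * h2 y), (fun y => p1 y * p2 y)).
    split => /=.
    - exact: RS_mul.
    - exact: RS_mul.
    - by rewrite p1x p2x mulr1.
    - by move=> y; rewrite -H1 -H2; ring.
  rewrite (vE _ _ R12) /val /= !uM // p1x p2x hx1 hx2; ring.
Qed.
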